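(* For every $n\in\mathbb{N}$, $A_n(p,q,t)=A_n(q,p,t)$, where $$A_n(p,q,t)=\sum_{\pi\in\mathfrak{S}_n}p^{(13\text{-}2)(\pi)}q^{(2\text{-}31)(\pi)}t^{\operatorname{des}(\pi)}.$$
   Context: For $\pi=a_1\cdots a_n\in\mathfrak{S}_n$: $\operatorname{des}(\pi)=|\{i\in[n-1]:a_i>a_{i+1}\}|$; $(2\text{-}31)(\pi)$ is the number of pairs $1\le i<j\le n-1$ with $a_{j+1}<a_i<a_j$; $(13\text{-}2)(\pi)$ is the number of pairs $2\le i<j\le n$ with $a_{i-1}<a_j<a_i$. *)

(* Defs.v *)
From mathcomp Require Import all_boot all_order all_algebra all_fingroup.
Set Implicit Arguments. Unset Strict Implicit. Unset Printing Implicit Defensive.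
Import GRing.Theory.

(* Positions are 0-indexed: a_k = val (s k) for k < n (the paper's a_{k+1}).
   Values are 0..n-1 instead of 1..n (only relative order matters). *)

Definition pval (n : nat) (s : 'S_n) (k : nat) : nat :=
  match insub k : option 'I_n with Some i => val (s i) | None => 0 end.

Definition des (n : nat) (s : 'S_n) : nat :=
  \sum_(0 <= i < n) ((i.+1 < n) && (pval s i.+1 < pval s i)).

Definition pat2_31 (n : nat) (s : 'S_n) : nat :=
  \sum_(0 <= i < n) \sum_(0 <= j < n)
    [&& i < j, j.+1 < n, pval s j.+1 < pval s i & pval s i < pval s j].

Definition pat13_2 (n : nat) (s : 'S_n) : nat :=
  \sum_(0 <= i < n) \sum_(0 <= j < n)
    [&& 0 < i, i < j, pval s i.-1 < pval s j & pval s j < pval s i].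

Definition A_poly (R : comNzRingType) (n : nat) (p q t : R) : R :=
  \sum_(s : 'S_n) p ^+ pat13_2 s * q ^+ pat2_31 s * t ^+ des s.

(* Main.v *)
Require Import Defs.
From mathcomp Require Import all_boot all_order all_algebra all_fingroup.
Set Implicit Arguments. Unset Strict Implicit. Unset Printing Implicit Defensive.

Fixpoint P13 (s : seq nat) : nat :=
  match s with
  | a :: ((b :: s') as t) => count (fun c => (a < c) && (c < b)) s' + P13 t
  | _ => 0
  end.

Fixpoint D31 (a : nat) (s : seq nat) : nat :=
  match s with
  | b :: ((c :: _) as t) => ((c < a) && (a < b)) + D31 a t
  | _ => 0
  end.

Fixpoint Q31 (s : seq nat) : nat :=
  match s with
  | a :: t => D31 a t + Q31 t
  | [::] => 0
  end.

Fixpoint Ds (s : seq nat) : nat :=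
  match s with
  | a :: ((b :: _) as t) => (b < a) + Ds t
  | _ => 0
  end.

Lemma map_iotaS (f : nat -> nat) n :
  map f (iota 0 n.+1) = f 0 :: map (fun i => f i.+1) (iota 0 n).
Proof.
rewrite /= -[1]/(1 + 0) iotaDl -map_comp; congr (_ :: _).
Qed.

Lemma count_iota (a : pred nat) (h : nat -> nat) k :
  count a (map h (iota 0 k)) = \sum_(0 <= j < k) a (h j).
Proof.
rewrite -sum1_count big_map /index_iota subn0 big_mkcond /=.
by apply: eq_bigr => j _; case: (a (h j)).
Qed.

Lemma idxP (f : nat -> nat) n :
  \sum_(0 <= i < n) \sum_(0 <= j < n)
    [&& 0 < i, i < j, f i.-1 < f j & f j < f i] = P13 (map f (iota 0 n)).
Proof.
elim: n f => [|n IH] f; first by rewrite big_geq.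
rewrite big_nat_recl // big1_seq ?add0n; last by move=> j _.
rewrite map_iotaS.
have -> : \sum_(0 <= i < n) \sum_(0 <= j < n.+1)
    [&& 0 < i.+1, i.+1 < j, f i.+1.-1 < f j & f j < f i.+1] =
  \sum_(0 <= i < n) \sum_(0 <= j < n)
    [&& i < j, f i < f j.+1 & f j.+1 < f i.+1].
  apply: eq_bigr => i _; rewrite big_nat_recl //= add0n.
case: n IH => [|n] IH; first by rewrite big_geq.
have E (a : nat) (g : nat -> nat) : P13 (a :: map g (iota 0 n.+1)) =
   count (fun c => (a < c) && (c < g 0)) (map (fun i => g i.+1) (iota 0 n))
   + P13 (map g (iota 0 n.+1)).
  by rewrite map_iotaS.
rewrite E -IH.
rewrite [in LHS]big_nat_recl // [in RHS]big_nat_recl //.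
rewrite [X in _ = _ + (X + _)]big1_seq ?add0n //.
congr (_ + _).
  rewrite count_iota big_nat_recl // /= add0n.
Qed.

Lemma idxD a (g : nat -> nat) n :
  D31 a (map g (iota 0 n)) =
  \sum_(0 <= j < n) [&& j.+1 < n, g j.+1 < a & a < g j].
Proof.
elim: n g => [|n IH] g; first by rewrite big_geq.
rewrite map_iotaS.
case: n IH => [|n] IH; first by rewrite big_nat1.
have E (b : nat) (h : nat -> nat) : D31 a (b :: map h (iota 0 n.+1)) =
   ((h 0 < a) && (a < b)) + D31 a (map h (iota 0 n.+1)).
  by rewrite map_iotaS.
rewrite E IH [in RHS]big_nat_recl //.
Qed.

Lemma idxQ (f : nat -> nat) n :
  \sum_(0 <= i < n) \sum_(0 <= j < n)
    [&& i < j, j.+1 < n, f j.+1 < f i & f i < f j] = Q31 (map f (iota 0 n)).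
Proof.
elim: n f => [|n IH] f; first by rewrite big_geq.
rewrite map_iotaS /= -IH idxD big_nat_recl //.
congr (_ + _).
  rewrite big_nat_recl //.
apply: eq_bigr => i _; rewrite big_nat_recl //.
Qed.

Lemma idxDs (f : nat -> nat) n :
  \sum_(0 <= i < n) ((i.+1 < n) && (f i.+1 < f i)) = Ds (map f (iota 0 n)).
Proof.
elim: n f => [|n IH] f; first by rewrite big_geq.
rewrite map_iotaS.
case: n IH => [|n] IH; first by rewrite big_nat1.
have E (b : nat) (h : nat -> nat) : Ds (b :: map h (iota 0 n.+1)) =
   (h 0 < b) + Ds (map h (iota 0 n.+1)).
  by rewrite map_iotaS.
rewrite E -IH big_nat_recl //.
Qed.

From mathcomp Require Import zify.

Fixpoint E13 (a : nat) (s : seq nat) : nat :=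
  match s with
  | b :: ((c :: _) as t) => ((b < a) && (a < c)) + E13 a t
  | _ => 0
  end.

Lemma P13_rcons s a : P13 (rcons s a) = P13 s + E13 a s.
Proof.
elim: s => [|x s IH] //.
case: s IH => [|y s] IH //.
have -> : P13 (rcons [:: x, y & s] a) =
  count (fun c => (x < c) && (c < y)) (rcons s a) + P13 (rcons (y :: s) a) by [].
have -> : P13 [:: x, y & s] =
  count (fun c => (x < c) && (c < y)) s + P13 (y :: s) by [].
have -> : E13 a [:: x, y & s] = ((x < a) && (a < y)) + E13 a (y :: s) by [].
rewrite IH -cats1 count_cat /=.
lia.
Qed.

Lemma E13_rcons a s z b :
  E13 a (rcons (b :: s) z) = E13 a (b :: s) + ((last b s < a) && (a < z)).
Proof.
elim: s b => [|y s IH] b; first by rewrite /= addn0.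
have -> : E13 a (rcons [:: b, y & s] z) =
  ((b < a) && (a < y)) + E13 a (rcons (y :: s) z) by [].
have -> : E13 a [:: b, y & s] = ((b < a) && (a < y)) + E13 a (y :: s) by [].
by rewrite IH /= addnA.
Qed.

Lemma D31_rev a m : D31 a m = E13 a (rev m).
Proof.
elim: m => [|b m IH] //=.
case: m IH => [|c m] IH //=.
rewrite rev_cons.
case E: (rev (c :: m)) => [|d r]; first by move: E; rewrite rev_cons; case: (rev m).
rewrite E13_rcons -E -IH.
have -> : last d r = c by rewrite -(last_cons 0) -E rev_cons last_rcons.
by rewrite addnC.
Qed.

Lemma Q31_rev l : Q31 l = P13 (rev l).
Proof.
elim: l => [|a l IH] //=.
by rewrite rev_cons P13_rcons IH D31_rev addnC.
Qed.

Definition nxt (l : seq nat) (y : nat) := head y.+1 (drop (index y l).+1 l).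
Definition rb (l : seq nat) (y : nat) : bool := y < nxt l y.

Fixpoint tw (x : nat) (s : seq nat) : seq nat :=
  if s is a :: s' then (if a < x then a :: tw x s' else [::]) else [::].

Definition psi (x : nat) (l : seq nat) : seq nat :=
  let u0 := take (index x l) l in
  let v0 := drop (index x l).+1 l in
  if (x \in l) && (last x.+1 u0 < x) && (x < head x.+1 v0) then
    rev (drop (size (tw x (rev u0))) (rev u0)) ++ x :: rev (tw x (rev u0)) ++ v0
  else if (x \in l) && (x < last x.+1 u0) && (head x.+1 v0 < x) then
    u0 ++ tw x v0 ++ x :: drop (size (tw x v0)) v0
  else l.

Definition Hmv (u B v : seq nat) (x : nat) :=
  [&& all (fun b => b < x) B, B != [::], x < last x.+1 u, x < head x.+1 v
    & uniq (u ++ B ++ x :: v)].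

Lemma head_rev (x0 : nat) s : head x0 (rev s) = last x0 s.
Proof. by case/lastP: s => //= s y; rewrite rev_rcons last_rcons. Qed.

Lemma last_rev (x0 : nat) s : last x0 (rev s) = head x0 s.
Proof. by rewrite -[s in RHS]revK head_rev. Qed.

Lemma drop_piv (x : nat) u v : x \notin u -> drop (index x (u ++ x :: v)).+1 (u ++ x :: v) = v.
Proof. by move=> H; rewrite index_pivot //; elim: u {H} => /= [|a u ->]; rewrite ?drop0. Qed.

Lemma uniq_mid (s t : seq nat) x : uniq (s ++ x :: t) -> (x \notin s) && (x \notin t).
Proof.
rewrite cat_uniq /= => /and3P [_ /norP [H _] /andP [H2 _]]; by rewrite H H2.
Qed.

Lemma tw_all x s : all (fun b => b < x) (tw x s).
Proof. elim: s => //= a s IH; case: ifP => //= ->; exact IH. Qed.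

Lemma tw_cat_drop x s : tw x s ++ drop (size (tw x s)) s = s.
Proof. elim: s => //= a s IH; case: ifP => //= _; by rewrite IH. Qed.

Lemma tw_next x s : ~~ (head x.+1 (drop (size (tw x s)) s) < x).
Proof.
elim: s => [|a s IH] /=; first lia.
by case: ifP => /= H; [exact IH | rewrite H].
Qed.

Lemma tw_cat x B v : all (fun b => b < x) B -> ~~ (head x.+1 v < x) -> tw x (B ++ v) = B.
Proof.
elim: B => [|b B IH] /=; first by case: v => //= h v _ /negbTE ->.
by move=> /andP [-> H] Hv; rewrite IH.
Qed.

Lemma tw_ne x s : head x.+1 s < x -> tw x s != [::].
Proof. case: s => [|a s] /=; [lia | by move=> ->]. Qed.

Lemma last_neq x s : x \notin s -> last x.+1 s != x.
Proof.
case/lastP: s => [|s y] /=; first lia.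
by rewrite last_rcons mem_rcons in_cons negb_or eq_sym => /andP [].
Qed.

Lemma head_neq x s : x \notin s -> head x.+1 s != x.
Proof.
case: s => [|a s] /=; first lia.
by rewrite in_cons negb_or eq_sym => /andP [].
Qed.

Lemma lt_of_neq x a : a != x -> ~~ (a < x) -> x < a.
Proof. lia. Qed.

Lemma rb_at s y t : y \notin s -> rb (s ++ y :: t) y = (y < head y.+1 t).
Proof. by move=> H; rewrite /rb /nxt drop_piv. Qed.

Lemma rb_notin l y : y \notin l -> rb l y.
Proof. by move=> H; rewrite /rb /nxt memNindex // drop_oversize //=. Qed.

Lemma Mperm u B v (x : nat) : perm_eq (u ++ B ++ x :: v) (u ++ x :: B ++ v).
Proof.
rewrite perm_cat2l.
rewrite perm_sym; have := perm_catCA [:: x] B v; rewrite /= => ->; exact: perm_refl.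
Qed.

Lemma Hmv_uniq2 u B v x : Hmv u B v x -> uniq (u ++ x :: B ++ v).
Proof. by case/and5P => _ _ _ _ U; rewrite -(perm_uniq (Mperm u B v x)). Qed.

Lemma psi_da u B v x : Hmv u B v x -> psi x (u ++ B ++ x :: v) = u ++ x :: B ++ v.
Proof.
case/and5P => HB Bn Hu Hv U.
have /andP [xuB xv] : (x \notin u ++ B) && (x \notin v) by apply: uniq_mid; rewrite -catA.
rewrite /psi catA take_pivot // drop_piv //.
have -> : x \in (u ++ B) ++ x :: v by rewrite mem_cat mem_head orbT.
have -> : last x.+1 (u ++ B) < x.
  case: B HB Bn {U xuB} => [|b B] //= /andP [hb hB] _.
  rewrite last_cat /=; have := mem_last b B; rewrite in_cons => /orP [/eqP -> //|].
  by move/(allP hB).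
rewrite Hv /= rev_cat tw_cat ?all_rev //; last by rewrite head_rev -leqNgt ltnW.
by rewrite drop_size_cat // !revK.
Qed.

Lemma psi_dd u B v x : Hmv u B v x -> psi x (u ++ x :: B ++ v) = u ++ B ++ x :: v.
Proof.
move=> H; have U2 := Hmv_uniq2 H; case/and5P: H => HB Bn Hu Hv U.
have /andP [xu xBv] := uniq_mid U2.
rewrite /psi take_pivot // drop_piv //.
rewrite mem_cat mem_head orbT /= ltnNge (ltnW Hu) /= Hu /=.
have hB : head x.+1 (B ++ v) < x.
  by case: B HB Bn {U U2 xBv} => [|b B] //= /andP [].
rewrite hB tw_cat //; last by rewrite -leqNgt ltnW.
by rewrite drop_size_cat.
Qed.

Lemma ltF a b : b <= a -> (a < b) = false.
Proof. by rewrite ltnNge => ->. Qed.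

Lemma rev_l1 (u B v : seq nat) x : rev (u ++ B ++ x :: v) = rev v ++ x :: rev B ++ rev u.
Proof. by rewrite catA rev_pivot rev_cat. Qed.

Lemma rev_l2 (u B v : seq nat) x : rev (u ++ x :: B ++ v) = rev v ++ rev B ++ x :: rev u.
Proof. by rewrite rev_pivot rev_cat catA. Qed.

Lemma Hrev u B v x : Hmv u B v x -> Hmv (rev v) (rev B) (rev u) x.
Proof.
move=> H; have U2 := Hmv_uniq2 H; case/and5P: H => HB Bn Hu Hv U.
apply/and5P; split.
- by rewrite all_rev.
- by rewrite -size_eq0 size_rev size_eq0.
- by rewrite last_rev.
- by rewrite head_rev.
- by rewrite -rev_l2 rev_uniq.
Qed.

Lemma rb_move u B v x y : Hmv u B v x -> y != x ->
  rb (u ++ B ++ x :: v) y = rb (u ++ x :: B ++ v) y.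
Proof.
move=> H yx; have U2 := Hmv_uniq2 H; case/and5P: H => HB Bn Hu Hv U.
case: (boolP (y \in u)) => [yu | yu].
  case/splitPr: yu U U2 Hu => s t U U2 Hu.
  rewrite -!catA /= in U U2 *.
  have /andP [ys _] := uniq_mid U.
  rewrite !rb_at //.
  case: t Hu {U U2} => [|c t] Hu //=.
  rewrite last_cat /= in Hu.
  case: B HB Bn => [|b B] //= /andP [hb _] _.
  rewrite !ltF //; lia.
case: (boolP (y \in B)) => [yB | yB].
  have yltx : y < x by apply: (allP HB).
  case/splitPr: yB HB Bn U U2 => s t HB Bn U U2.
  have E1 : u ++ (s ++ y :: t) ++ x :: v = (u ++ s) ++ y :: (t ++ x :: v) by rewrite -!catA.
  have E2 : u ++ x :: (s ++ y :: t) ++ v = (u ++ x :: s) ++ y :: (t ++ v) by rewrite -!catA.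
  rewrite E1 in U *; rewrite E2 in U2 *.
  have /andP [ys1 _] := uniq_mid U.
  have /andP [ys2 _] := uniq_mid U2.
  rewrite !rb_at //.
  case: t {U U2 E1 E2 HB Bn} => [|c t] //=.
  rewrite yltx; case: v Hv => [|h v] /= Hv; lia.
case: (boolP (y \in v)) => [yv | yv].
  case/splitPr: yv U U2 Hv => s t U U2 Hv.
  have E1 : u ++ B ++ x :: s ++ y :: t = (u ++ B ++ x :: s) ++ y :: t by rewrite -!catA.
  have E2 : u ++ x :: B ++ s ++ y :: t = (u ++ x :: B ++ s) ++ y :: t by rewrite -!catA /= -?catA.
  rewrite E1 in U *; rewrite E2 in U2 *.
  have /andP [ys1 _] := uniq_mid U.
  have /andP [ys2 _] := uniq_mid U2.
  by rewrite !rb_at.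
have n1 : y \notin u ++ B ++ x :: v by rewrite !(mem_cat, in_cons) !negb_or yu yB yv yx.
have n2 : y \notin u ++ x :: B ++ v by rewrite !(mem_cat, in_cons) !negb_or yu yB yv yx.
by rewrite !rb_notin.
Qed.

Lemma rb_x1 u B v x : Hmv u B v x ->
  rb (rev (u ++ x :: B ++ v)) x /\ rb (u ++ B ++ x :: v) x.
Proof.
move=> H; have H' := Hrev H; case/and5P: H' => _ _ _ _ U'.
case/and5P: H => HB Bn Hu Hv U.
have /andP [xuB _] : (x \notin u ++ B) && (x \notin v) by apply: uniq_mid; rewrite -catA.
have /andP [xvB _] : (x \notin rev v ++ rev B) && (x \notin rev u)
  by apply: uniq_mid; rewrite -catA.
rewrite rev_l2 catA rb_at // head_rev Hu; split => //.
by rewrite catA rb_at.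
Qed.

Lemma head_catne (d : nat) s w : s != [::] -> head d (s ++ w) = head d s.
Proof. by case: s. Qed.

Lemma rb_x2 u B v x : Hmv u B v x ->
  rb (rev (u ++ B ++ x :: v)) x = false /\ rb (u ++ x :: B ++ v) x = false.
Proof.
move=> H; have U2 := Hmv_uniq2 H; have H' := Hrev H; have U2' := Hmv_uniq2 H'.
case/and5P: H => HB Bn Hu Hv U.
have /andP [xu _] := uniq_mid U2.
have /andP [xv _] := uniq_mid U2'.
rewrite rev_l1 !rb_at //.
clear H' U U2 U2'.
case: B HB Bn => [|b B] //= /andP [hb hB] _.
split; last by rewrite ltF // ltnW.
rewrite head_catne; last by rewrite -size_eq0 size_rev.
rewrite head_rev /= ltF //; apply: ltnW.
have := mem_last b B; rewrite in_cons => /orP [/eqP -> //|].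
by move/(allP hB).
Qed.


Lemma count0 (a : pred nat) s : (forall c, a c = false) -> count a s = 0.
Proof. by move=> H; elim: s => //= c s ->; rewrite H. Qed.

Lemma count3 b x h s : b < x -> x < h -> x \notin s ->
  count (fun c => (b < c) && (c < x)) s + count (fun c => (x < c) && (c < h)) s =
  count (fun c => (b < c) && (c < h)) s.
Proof.
move=> bx xh; elim: s => //= c s IH.
rewrite in_cons negb_or => /andP [cx /IH <-].
have key : ((b < c) && (c < x)) + ((x < c) && (c < h)) = ((b < c) && (c < h)).
  have: c != x by rewrite eq_sym.
  case: (ltngtP c x) => // H _.
    by rewrite ?(ltn_trans H xh) /= ?andbT ?addn0 ?add0n.
  by rewrite ?(ltn_trans bx H) /= ?andbT ?addn0 ?add0n.
by rewrite -key addnACA.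
Qed.

Lemma P13_base2 x B v : all (fun b => b < x) B -> B != [::] ->
  P13 (x :: B ++ v) = P13 (B ++ v).
Proof.
case: B => [|b B] //= /andP [hb _] _.
rewrite count0 // => c; apply/negbTE/negP => /andP [H1 H2].
have := ltn_trans H1 H2; rewrite ltnNge (ltnW hb) //.
Qed.

Lemma P13_base1c x b B v : all (fun b => b < x) (b :: B) ->
  x < head x.+1 v -> x \notin v -> P13 ((b :: B) ++ x :: v) = P13 ((b :: B) ++ v).
Proof.
elim: B b => [|b' B IH] b /= /andP [hb hB] Hv xv.
  case: v Hv xv => [|h v] //= Hv; rewrite in_cons negb_or => /andP [_ xv].
  rewrite (ltF (b:=x) (a:=h)) ?andbF ?add0n; last exact: ltnW.
  by rewrite addnA count3.
have := IH b' hB Hv xv => /= ->.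
congr (_ + _); rewrite count_cat [in RHS]count_cat /=.
move: hB => /andP [hb' _].
rewrite (ltF (b:=b') (a:=x)) ?andbF ?add0n //; exact: ltnW.
Qed.

Lemma P13_base1 x B v : all (fun b => b < x) B -> B != [::] ->
  x < head x.+1 v -> x \notin v -> P13 (B ++ x :: v) = P13 (B ++ v).
Proof. case: B => // b B H _; exact: P13_base1c. Qed.

Lemma P13_move u B v x : Hmv u B v x -> P13 (u ++ B ++ x :: v) = P13 (u ++ x :: B ++ v).
Proof.
move=> H; have U2 := Hmv_uniq2 H; case/and5P: H => HB Bn Hu Hv U.
have /andP [_ xv] : (x \notin u ++ B) && (x \notin v) by apply: uniq_mid; rewrite -catA.
elim: u Hu {U U2} => [|a u IH] Hu.
  by change (P13 (B ++ x :: v) = P13 (x :: B ++ v)); rewrite P13_base1 // P13_base2.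
have Hu' : x < last x.+1 u by case: u Hu {IH}.
case: u IH Hu Hu' => [|c u] IH Hu Hu'.
  rewrite /= in Hu.
  case: B HB Bn {IH} => [|b B] // /andP [hb hB] _.
  have -> : P13 ([:: a] ++ (b :: B) ++ x :: v) =
    count (fun c => (a < c) && (c < b)) (B ++ x :: v) + P13 ((b :: B) ++ x :: v) by [].
  have -> : P13 ([:: a] ++ x :: (b :: B) ++ v) =
    count (fun c => (a < c) && (c < x)) (b :: B ++ v) + P13 (x :: (b :: B) ++ v) by [].
  rewrite !count0; first last.
    move=> c; apply/negbTE/negP => /andP [H1 H2]; move: (ltn_trans H1 H2); lia.
    move=> c; apply/negbTE/negP => /andP [H1 H2]; move: (ltn_trans H1 H2); lia.
  have hh : all (fun b => b < x) (b :: B) by apply/andP; split.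
  by rewrite !add0n P13_base1 // P13_base2.
have -> : P13 ((a :: c :: u) ++ B ++ x :: v) =
  count (fun y => (a < y) && (y < c)) (u ++ B ++ x :: v) + P13 ((c :: u) ++ B ++ x :: v) by [].
have -> : P13 ((a :: c :: u) ++ x :: B ++ v) =
  count (fun y => (a < y) && (y < c)) (u ++ x :: B ++ v) + P13 ((c :: u) ++ x :: B ++ v) by [].
rewrite (IH Hu'); congr (_ + _).
by have /seq.permP -> := Mperm u B v x.
Qed.

Lemma Q31_move u B v x : Hmv u B v x -> Q31 (u ++ B ++ x :: v) = Q31 (u ++ x :: B ++ v).
Proof.
move=> H; rewrite !Q31_rev rev_l1 rev_l2; symmetry; exact: (P13_move (Hrev H)).
Qed.

Lemma psi_cases x l : uniq l ->
  (exists u B v, Hmv u B v x /\ l = u ++ B ++ x :: v) \/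
  (exists u B v, Hmv u B v x /\ l = u ++ x :: B ++ v) \/
  (psi x l = l /\ rb (rev l) x = rb l x).
Proof.
move=> U; case: (boolP (x \in l)) => xl; last first.
  right; right; split; first by rewrite /psi (negbTE xl).
  by rewrite !rb_notin ?mem_rev.
have El : l = take (index x l) l ++ x :: drop (index x l).+1 l.
  by rewrite -(drop_index xl) cat_take_drop.
have /andP [xu xv] : (x \notin take (index x l) l) && (x \notin drop (index x l).+1 l).
  by apply: uniq_mid; rewrite -El.
case Hda: ((last x.+1 (take (index x l) l) < x) && (x < head x.+1 (drop (index x l).+1 l))).
  left.
  set u0 := take (index x l) l in El xu Hda *.
  set v0 := drop (index x l).+1 l in El xv Hda *.
  set r := rev u0; set k := size (tw x r).
  exists (rev (drop k r)), (rev (tw x r)), v0.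
  have Eu : rev (drop k r) ++ rev (tw x r) = u0 by rewrite -rev_cat tw_cat_drop revK.
  split; last by rewrite catA Eu.
  apply/and5P; split.
  - by rewrite all_rev tw_all.
  - rewrite -size_eq0 size_rev size_eq0; apply: tw_ne; rewrite /r head_rev.
    by case/andP: Hda.
  - rewrite last_rev; apply: lt_of_neq; last exact: tw_next.
    apply: head_neq; apply: contra xu => /mem_drop; by rewrite mem_rev.
  - by case/andP: Hda.
  - by rewrite catA Eu -El.
case Hdd: ((x < last x.+1 (take (index x l) l)) && (head x.+1 (drop (index x l).+1 l) < x)).
  right; left.
  set u0 := take (index x l) l in El xu Hdd Hda *.
  set v0 := drop (index x l).+1 l in El xv Hdd Hda *.
  exists u0, (tw x v0), (drop (size (tw x v0)) v0).
  split; last by rewrite tw_cat_drop.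
  apply/and5P; split.
  - exact: tw_all.
  - apply: tw_ne; by case/andP: Hdd.
  - by case/andP: Hdd.
  - apply: lt_of_neq; last exact: tw_next.
    apply: head_neq; apply: contra xv => /mem_drop; done.
  - by rewrite (perm_uniq (Mperm _ _ _ _)) tw_cat_drop -El.
right; right; split.
  by rewrite /psi xl Hda Hdd.
have -> : rb l x = (x < head x.+1 (drop (index x l).+1 l)) by rewrite {1}El rb_at.
rewrite {1}El rev_pivot rb_at ?mem_rev // head_rev.
move: (last_neq xu) (head_neq xv) Hda Hdd.
set a := last _ _; set b := head _ _.
case: (ltngtP a x) => [ax|xa|ax]; case: (ltngtP b x) => [bx|xb|bx] //=; rewrite ?eqxx //.
Qed.

Lemma Ds_rb l : uniq l -> \sum_(y <- l) (~~ rb l y : nat) = Ds l.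
Proof.
elim: l => [|a l IH]; first by rewrite big_nil.
move=> /= /andP [al U]; rewrite big_cons.
have -> : \sum_(y <- l) (~~ rb (a :: l) y : nat) = \sum_(y <- l) (~~ rb l y : nat).
  rewrite big_seq_cond [RHS]big_seq_cond; apply: eq_bigr => y /andP [yl _].
  have ay : (a == y) = false by apply/negbTE; apply: contraNneq al => ->.
  by rewrite /rb /nxt /= ay.
rewrite IH // /rb /nxt /= eqxx /=.
case: l al U IH => [|b l] al U IH; first by rewrite /= ltnSn.
rewrite /= -leqNgt leq_eqVlt.
have -> : (b == a) = false by apply/negbTE; apply: contra al => /eqP ->; rewrite mem_head.
by [].
Qed.

Definition gS (S : seq nat) (l : seq nat) (y : nat) : nat :=
  if y \in S then ~~ rb l y else ~~ rb (rev l) y.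
Definition fS (S : seq nat) (l : seq nat) : nat := \sum_(y <- l) gS S l y.

Lemma fS_move u B v x S : Hmv u B v x -> x \notin S ->
  fS S (u ++ x :: B ++ v) = fS (x :: S) (u ++ B ++ x :: v) /\
  fS S (u ++ B ++ x :: v) = fS (x :: S) (u ++ x :: B ++ v).
Proof.
move=> H xS; have [R1 R2] := rb_x1 H; have [R3 R4] := rb_x2 H.
have H' := Hrev H.
have P1 : perm_eq (u ++ x :: B ++ v) (u ++ B ++ x :: v) by rewrite perm_sym Mperm.
rewrite /fS; split.
  rewrite (@perm_big _ _ _ _ _ _ _ _ P1); apply: eq_bigr => y _.
  rewrite /gS in_cons; case: (eqVneq y x) => [->|yx] /=.
    by rewrite (negbTE xS) R1 R2.
  rewrite (rb_move H yx); congr (if _ then _ else ~~ _).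
  by rewrite rev_l1 rev_l2 (rb_move H' yx).
rewrite (@perm_big _ _ _ _ _ _ _ _ (Mperm u B v x)); apply: eq_bigr => y _.
rewrite /gS in_cons; case: (eqVneq y x) => [->|yx] /=.
  by rewrite (negbTE xS) R3 R4.
rewrite (rb_move H yx); congr (if _ then _ else ~~ _).
by rewrite rev_l1 rev_l2 (rb_move H' yx).
Qed.

Lemma key x S l : uniq l -> x \notin S ->
  [/\ psi x (psi x l) = l, perm_eq (psi x l) l, P13 (psi x l) = P13 l,
      Q31 (psi x l) = Q31 l & fS S (psi x l) = fS (x :: S) l].
Proof.
move=> U xS.
case: (psi_cases x U) => [[u [B [v [H ->]]]] | [[u [B [v [H ->]]]] | [E R]]].
- have [F1 F2] := fS_move H xS.
  rewrite psi_da // psi_dd //; split => //.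
  + by rewrite perm_sym Mperm.
  + by rewrite P13_move.
  + by rewrite Q31_move.
- have [F1 F2] := fS_move H xS.
  rewrite psi_dd // psi_da //; split => //.
  + exact: Mperm.
  + by rewrite P13_move.
  + by rewrite Q31_move.
rewrite E; split => //.
rewrite /fS; apply: eq_bigr => y _.
rewrite /gS in_cons; case: (eqVneq y x) => [->|yx] //=.
by rewrite (negbTE xS) R.
Qed.

Section Sums.
Import GRing.Theory.
Local Open Scope ring_scope.

Lemma reindex_inv (R : comNzRingType) (L : seq (seq nat))
    (phi : seq nat -> seq nat) (F : seq nat -> R) :
  uniq L -> {in L, forall l, phi l \in L} -> {in L, forall l, phi (phi l) = l} ->
  \sum_(l <- L) F (phi l) = \sum_(l <- L) F l.
Proof.
move=> UL H1 H2; rewrite -(big_map phi predT F); apply: perm_big.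
apply: uniq_perm => //.
  rewrite map_inj_in_uniq // => a b aL bL E.
  by rewrite -(H2 a aL) E H2.
move=> l; apply/mapP/idP => [[l' l'L ->]|lL]; first exact: H1.
by exists (phi l); [exact: H1 | rewrite H2].
Qed.

End Sums.

Definition lst n (s : 'S_n) : seq nat := map (Defs.pval s) (iota 0 n).
Definition Ls n : seq (seq nat) := map (@lst n) (index_enum {perm 'I_n}).

Lemma pval_ord n (s : 'S_n) (i : 'I_n) : Defs.pval s i = s i.
Proof. by rewrite /Defs.pval valK. Qed.

Lemma lst_perm n (s : 'S_n) : perm_eq (lst s) (iota 0 n).
Proof.
have -> : lst s = map val (map s (enum 'I_n)).
  by rewrite /lst -val_enum_ord -!map_comp; apply: eq_map => i /=; rewrite pval_ord.
rewrite -val_enum_ord perm_map //.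
apply: uniq_perm; first by rewrite map_inj_uniq ?enum_uniq //; exact: perm_inj.
  exact: enum_uniq.
move=> i; rewrite mem_enum; apply/mapP; exists ((s^-1)%g i); first by rewrite mem_enum.
by rewrite permKV.
Qed.

Lemma lst_inj n : injective (@lst n).
Proof.
move=> s1 s2 E; apply/permP => i; apply: val_inj.
have := congr1 (fun l => nth 0 l i) E.
by rewrite /lst !(nth_map 0) ?size_iota // nth_iota // add0n !pval_ord.
Qed.

Lemma Ls_uniq n : uniq (Ls n).
Proof. by rewrite map_inj_uniq ?index_enum_uniq //; exact: lst_inj. Qed.

Definition itup n : n.-tuple nat := Tuple (introT eqP (size_iota 0 n)).

Lemma mem_Ls n l : (l \in Ls n) = perm_eq l (iota 0 n).
Proof.
apply/idP/idP.
  by case/mapP => s _ ->; exact: lst_perm.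
move=> H; have : perm_eq l (itup n) by [].
case/tuple_permP => p El.
have -> : l = lst p.
  apply: (@eq_from_nth _ 0); first by rewrite El size_tuple /lst size_map size_iota.
  move=> k; rewrite El size_tuple => Hk.
  have -> : nth 0 [tuple tnth (itup n) (p i) | i < n] k =
            nth 0 [tuple tnth (itup n) (p i) | i < n] (Ordinal Hk) by [].
  rewrite -tnth_nth tnth_mktuple (tnth_nth 0) /= nth_iota // add0n.
  by rewrite /lst (nth_map 0) ?size_iota // nth_iota // add0n -[k]/(val (Ordinal Hk)) pval_ord.
by apply: map_f; exact: mem_index_enum.
Qed.

Section Final.
Import GRing.Theory.
Local Open Scope ring_scope.

Lemma Ls_uniq_el n l : l \in Ls n -> uniq l.
Proof. by rewrite mem_Ls => /perm_uniq ->; exact: iota_uniq. Qed.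

Lemma stepS (R : comNzRingType) n (a b t : R) S : uniq S ->
  \sum_(l <- Ls n) a ^+ P13 l * b ^+ Q31 l * t ^+ fS [::] l =
  \sum_(l <- Ls n) a ^+ P13 l * b ^+ Q31 l * t ^+ fS S l.
Proof.
elim: S => // x S IH /= /andP [xS US]; rewrite IH //.
have H1 : {in Ls n, forall l, psi x l \in Ls n}.
  move=> l lL; have [_ P2 _ _ _] := key (Ls_uniq_el lL) xS.
  by rewrite mem_Ls (perm_trans P2) // -mem_Ls.
have H2 : {in Ls n, forall l, psi x (psi x l) = l}.
  by move=> l lL; have [P1 _ _ _ _] := key (Ls_uniq_el lL) xS.
rewrite -(@reindex_inv _ (Ls n) (psi x) (fun l => a ^+ P13 l * b ^+ Q31 l * t ^+ fS S l))
  ?Ls_uniq //.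
apply: eq_big_seq => l lL.
have [_ _ E3 E4 E5] := key (Ls_uniq_el lL) xS.
by rewrite E3 E4 E5.
Qed.

Lemma final (R : comNzRingType) n (a b t : R) :
  \sum_(l <- Ls n) a ^+ P13 l * b ^+ Q31 l * t ^+ Ds l =
  \sum_(l <- Ls n) b ^+ P13 l * a ^+ Q31 l * t ^+ Ds l.
Proof.
have E1 : \sum_(l <- Ls n) a ^+ P13 l * b ^+ Q31 l * t ^+ Ds l =
          \sum_(l <- Ls n) a ^+ P13 l * b ^+ Q31 l * t ^+ fS (iota 0 n) l.
  apply: eq_big_seq => l lL; congr (_ * t ^+ _).
  rewrite /fS -(Ds_rb (Ls_uniq_el lL)); apply: eq_big_seq => y yl.
  rewrite /gS; have -> : y \in iota 0 n.
    by rewrite -(perm_mem (etrans (esym (mem_Ls n l)) lL)).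
  by [].
rewrite E1 -stepS ?iota_uniq //.
have E2 : \sum_(l <- Ls n) a ^+ P13 l * b ^+ Q31 l * t ^+ fS [::] l =
          \sum_(l <- Ls n) (fun m => a ^+ P13 (rev m) * b ^+ Q31 (rev m) * t ^+ Ds m) (rev l).
  apply: eq_big_seq => l lL; rewrite /= !revK; congr (_ * t ^+ _).
  rewrite /fS /gS -big_rev -Ds_rb ?rev_uniq ?(Ls_uniq_el lL) //.
rewrite E2 (@reindex_inv _ (Ls n) (@rev nat) (fun m => a ^+ P13 (rev m) * b ^+ Q31 (rev m) * t ^+ Ds m)) ?Ls_uniq //; first last.
- by move=> l _; rewrite revK.
- by move=> l; rewrite !mem_Ls perm_rev.
apply: eq_bigr => l _.
rewrite -Q31_rev.
have -> : Q31 (rev l) = P13 l by rewrite Q31_rev revK.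
by rewrite [a ^+ _ * _]mulrC.
Qed.

Lemma bridge (R : comNzRingType) n (a b t : R) :
  A_poly n a b t = \sum_(l <- Ls n) a ^+ P13 l * b ^+ Q31 l * t ^+ Ds l.
Proof.
rewrite /A_poly /Ls big_map; apply: eq_bigr => s _.
by rewrite /pat13_2 /pat2_31 /des idxP idxQ idxDs.
Qed.

End Final.

Unset Implicit Arguments.

Theorem proposition5p2 (R : comNzRingType) (n : nat) (p q t : R) :
  A_poly n p q t = A_poly n q p t.
Proof. by rewrite !bridge final. Qed.
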